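(* Fix linearly independent $f,g,h\in S_1\oplus S_2$. Then $\dim\big(\pi_{1,2}P_\xi(S_3)+[f,g,h]\big)=5$ for almost every $\xi\in\mathbb{R}^2$.
   Context: For $j\ge0$, $S_j$ is the real vector space of homogeneous polynomials of degree $j$ in $r,s$; $[\cdot]$ denotes linear span. For $\xi=(a,b)\in\mathbb{R}^2$ and a polynomial $f$, $P_\xi f(r,s)=f(\xi)+\partial_rf(\xi)(r-a)+\partial_sf(\xi)(s-b)+\frac12\partial_{rr}f(\xi)(r-a)^2+\partial_{rs}f(\xi)(r-a)(s-b)+\frac12\partial_{ss}f(\xi)(s-b)^2$ (second-order Taylor polynomial at $\xi$), an element of $S_0\oplus S_1\oplus S_2$. $\pi_{1,2}$ is the projection of $S_0\oplus S_1\oplus S_2$ onto $S_1\oplus S_2$ along $S_0$. *)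

(* Defs.v *)
From HB Require Import structures.
From mathcomp Require Import all_boot all_order all_algebra.
From mathcomp Require Import all_classical all_reals all_analysis.
Set Implicit Arguments. Unset Strict Implicit. Unset Printing Implicit Defensive.
Import Order.TTheory GRing.Theory Num.Theory.
Local Open Scope ring_scope.

(* Real bivariate polynomials in r, s are represented as {poly {poly R}}:
   the outer variable is r, the inner variable (in the coefficients) is s.
   The coefficient of r^i s^k in p is (p`_i)`_k. *)
Definition bipoly (R : realType) := {poly {poly R}}.

Definition var_r {R : realType} : bipoly R := 'X.
Definition var_s {R : realType} : bipoly R := ('X : {poly R})%:P.
Definition cst {R : realType} (c : R) : bipoly R := c%:P%:P.

Definition bicoef {R : realType} (p : bipoly R) (i k : nat) : R := (p`_i)`_k.

Definition in_S {R : realType} (j : nat) (p : bipoly R) : Prop :=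
  forall i k, (i + k != j)%N -> bicoef p i k = 0.

Definition in_S12 {R : realType} (p : bipoly R) : Prop :=
  forall i k, (i + k != 1)%N -> (i + k != 2)%N -> bicoef p i k = 0.

Definition dr {R : realType} (p : bipoly R) : bipoly R := p^`().
Definition ds {R : realType} (p : bipoly R) : bipoly R :=
  map_poly (fun q : {poly R} => q^`()) p.
Definition ev {R : realType} (p : bipoly R) (xi : R * R) : R :=
  (p.[xi.1%:P]).[xi.2].

Definition taylor2 {R : realType} (xi : R * R) (f : bipoly R) : bipoly R :=
  let a := xi.1 in let b := xi.2 in
  let u := var_r - cst a in let v := var_s - cst b in
  cst (ev f xi)
  + cst (ev (dr f) xi) * u + cst (ev (ds f) xi) * v
  + cst (ev (dr (dr f)) xi / 2) * u ^+ 2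
  + cst (ev (dr (ds f)) xi) * (u * v)
  + cst (ev (ds (ds f)) xi / 2) * v ^+ 2.

(* projection pi_{1,2} onto S_1 (+) S_2 along S_0 (applied to elements of
   S_0 (+) S_1 (+) S_2): remove the constant term *)
Definition pi12 {R : realType} (p : bipoly R) : bipoly R := p - cst (bicoef p 0 0).

(* coordinates of an element of S_1 (+) S_2 in the basis r, s, r^2, rs, s^2 *)
Definition coord12 {R : realType} (p : bipoly R) : 'rV[R]_5 :=
  \row_(j < 5) bicoef p (nth 0%N [:: 1; 0; 2; 1; 0]%N j)
                        (nth 0%N [:: 0; 1; 0; 1; 2]%N j).

Definition S3basis {R : realType} (i : 'I_4) : bipoly R :=
  var_r ^+ (3 - i) * var_s ^+ i.

(* dim (pi_{1,2} P_xi (S_3) + [f, g, h]) computed as the rank of the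
   coordinate matrix of a spanning family of this subspace of S_1 (+) S_2 *)
Definition dim_sum {R : realType} (xi : R * R) (f g h : bipoly R) : nat :=
  \rank (col_mx (\matrix_(i < 4) coord12 (pi12 (taylor2 xi (S3basis i))))
                (\matrix_(i < 3) coord12 (nth 0 [:: f; g; h] i))).

Definition lin_indep3 {R : realType} (f g h : bipoly R) : Prop :=
  forall a b c : R, cst a * f + cst b * g + cst c * h = 0 -> [/\ a = 0, b = 0 & c = 0].

(* Main.v *)
Require Import Defs.
From HB Require Import structures.
From mathcomp Require Import all_boot all_order all_algebra.
From mathcomp Require Import all_classical all_reals all_analysis.
From mathcomp Require Import ring lra.
Import Order.TTheory GRing.Theory Num.Theory.
Local Open Scope ring_scope.

Section S.
Variable R : realType.
Local Notation vr := (@var_r R).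
Local Notation vs := (@var_s R).
Local Notation kst := (@Defs.cst R).
Local Notation BP := (bipoly R).

Definition mon (m n : nat) : BP := vr ^+ m * vs ^+ n.

Lemma bicoefD (p q : BP) i k : bicoef (p + q) i k = bicoef p i k + bicoef q i k.
Proof. by rewrite /bicoef !coefD. Qed.
Lemma bicoefB (p q : BP) i k : bicoef (p - q) i k = bicoef p i k - bicoef q i k.
Proof. by rewrite /bicoef !coefB. Qed.
Lemma bicoefCM c (p : BP) i k : bicoef (kst c * p) i k = c * bicoef p i k.
Proof. by rewrite /bicoef /Defs.cst !coefCM. Qed.
Lemma bicoef_mon m n i k : bicoef (mon m n) i k = if (i == m) && (k == n) then 1 else 0.
Proof.
rewrite /bicoef /mon /var_r /var_s -rmorphXn coefMC coefXn.
case: (i == m); last by rewrite mul0r coef0 andFb.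
by rewrite mul1r coefXn; case: (k == n).
Qed.
Lemma bicoefC c i k : bicoef (kst c) i k = if (i == 0%N) && (k == 0%N) then c else 0.
Proof.
rewrite /bicoef /Defs.cst coefC; case: (i == 0%N); last by rewrite coef0.
by rewrite coefC.
Qed.

Lemma coord_pi12 (p : BP) : coord12 (pi12 p) = coord12 p.
Proof.
apply/rowP => j; rewrite !mxE /pi12 bicoefB bicoefC.
by case: j => [[|[|[|[|[|?]]]]] Hj] //=; rewrite subr0.
Qed.

Lemma taylor2E (xi : R * R) (q : BP) : 
  taylor2 xi q = 
   kst (ev q xi - ev (dr q) xi * xi.1 - ev (ds q) xi * xi.2 + ev (dr (dr q)) xi / 2 * xi.1 ^+ 2
        + ev (dr (ds q)) xi * xi.1 * xi.2 + ev (ds (ds q)) xi / 2 * xi.2 ^+ 2) * mon 0 0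
   + kst (ev (dr q) xi - ev (dr (dr q)) xi / 2 * 2 * xi.1 - ev (dr (ds q)) xi * xi.2) * mon 1 0
   + kst (ev (ds q) xi - ev (dr (ds q)) xi * xi.1 - ev (ds (ds q)) xi / 2 * 2 * xi.2) * mon 0 1
   + kst (ev (dr (dr q)) xi / 2) * mon 2 0
   + kst (ev (dr (ds q)) xi) * mon 1 1
   + kst (ev (ds (ds q)) xi / 2) * mon 0 2.
Proof.
rewrite /taylor2 /mon /Defs.cst /=.
ring.
Qed.

Lemma coord_taylor (xi : R * R) (q : BP) : coord12 (pi12 (taylor2 xi q)) =
  \row_(j < 5) [:: ev (dr q) xi - ev (dr (dr q)) xi * xi.1 - ev (dr (ds q)) xi * xi.2;
                  ev (ds q) xi - ev (dr (ds q)) xi * xi.1 - ev (ds (ds q)) xi * xi.2;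
                  ev (dr (dr q)) xi / 2; ev (dr (ds q)) xi; ev (ds (ds q)) xi / 2]`_j.
Proof.
rewrite coord_pi12 taylor2E; apply/rowP => j; rewrite !mxE.
rewrite !(bicoefD, bicoefCM, bicoef_mon).
case: j => [[|[|[|[|[|?]]]]] Hj] //=; rewrite ?mulr0 ?mulr1 ?add0r ?addr0 ?divfK ?pnatr_eq0 //.
Qed.

Lemma bicoef_dr (p : BP) i k : bicoef (dr p) i k = bicoef p i.+1 k *+ i.+1.
Proof. by rewrite /bicoef /dr coef_deriv coefMn. Qed.
Lemma bicoef_ds (p : BP) i k : bicoef (ds p) i k = bicoef p i k.+1 *+ k.+1.
Proof. by rewrite /bicoef /ds coef_map_id0 ?deriv0 // coef_deriv. Qed.

Lemma bipolyP (p q : BP) : (forall i k, bicoef p i k = bicoef q i k) -> p = q.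
Proof. by move=> H; apply/polyP => i; apply/polyP => k; apply: H. Qed.

Lemma dr_mon c m n : dr (kst c * mon m n) = kst (c * m%:R) * mon m.-1 n.
Proof.
apply: bipolyP => i k; rewrite bicoef_dr !bicoefCM !bicoef_mon.
case: m => [|m] /=; first by rewrite mulr0 mul0r mul0rn.
rewrite eqSS; case: (k == n); rewrite ?andbT ?andbF ?mulr0 ?mul0rn //.
case: (i =P m) => [->|_]; last by rewrite ?mulr0 ?mul0rn.
by rewrite ?mulr1 ?mul1r mulr_natr.
Qed.

Lemma ds_mon c m n : ds (kst c * mon m n) = kst (c * n%:R) * mon m n.-1.
Proof.
apply: bipolyP => i k; rewrite bicoef_ds !bicoefCM !bicoef_mon.
case: n => [|n] /=; first by rewrite andbF mulr0 mul0r mul0rn.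
rewrite eqSS; case: (i == m); rewrite ?andbT ?andbF ?mulr0 ?mul0rn //=.
case: (k =P n) => [->|_]; last by rewrite ?mulr0 ?mul0rn.
by rewrite ?mulr1 ?mul1r mulr_natr.
Qed.

Lemma ev_mon c m n (xi : R * R) : ev (kst c * mon m n) xi = c * xi.1 ^+ m * xi.2 ^+ n.
Proof.
rewrite /ev /mon /var_r /var_s /Defs.cst !hornerE.
by [].
Qed.

Lemma S3E (i : 'I_4) : S3basis i = kst 1 * mon (3 - i) i :> BP.
Proof. by rewrite /S3basis /mon /Defs.cst mul1r. Qed.

Definition rowT (a b : R) (i : nat) : seq R :=
  match i with
  | 0 => [:: - (3 * a ^+ 2); 0; 3 * a; 0; 0]
  | 1 => [:: - (2 * a * b); - a ^+ 2; b; 2 * a; 0]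
  | 2 => [:: - b ^+ 2; - (2 * a * b); 0; 2 * b; a]
  | _ => [:: 0; - (3 * b ^+ 2); 0; 0; 3 * b]
  end.

Lemma rowS3 (xi : R * R) (i : 'I_4) :
  coord12 (pi12 (taylor2 xi (S3basis i))) = \row_(j < 5) (rowT xi.1 xi.2 i)`_j.
Proof.
rewrite coord_taylor S3E; apply/rowP => j; rewrite !mxE.
case: i => [[|[|[|[|?]]]] Hi] //=;
  rewrite ?subSS ?subn0 ?subnn;
  rewrite !(dr_mon, ds_mon, ev_mon) /=;
  case: j => [[|[|[|[|[|?]]]]] Hj] //=; try done; field; done.
Qed.
End S.

Arguments rowT {R}.
Section S.
Variable R : realType.
Local Notation vr := (@var_r R).
Local Notation vs := (@var_s R).
Local Notation kst := (@Defs.cst R).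
Local Notation BP := (bipoly R).

Definition cc (p : BP) (j : nat) : R :=
  bicoef p (nth 0%N [:: 1; 0; 2; 1; 0]%N j) (nth 0%N [:: 0; 1; 0; 1; 2]%N j).
Definition w1 (p : BP) (a b : R) := 2 * cc p 0 + 2 * cc p 2 * a + cc p 3 * b.
Definition w2 (p : BP) (a b : R) := 2 * cc p 1 + cc p 3 * a + 2 * cc p 4 * b.
Definition Jf (p q : BP) (a b : R) := w1 p a b * w2 q a b - w2 p a b * w1 q a b.

Lemma pair_zero (u1 u2 v1 v2 x0 x1 : R) :
  u1 * x0 + u2 * x1 = 0 -> v1 * x0 + v2 * x1 = 0 -> u1 * v2 - u2 * v1 != 0 ->
  x0 = 0 /\ x1 = 0.
Proof.
move=> Hu Hv HJ.
have h0 : x0 * (u1 * v2 - u2 * v1) = 0.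
  have -> : x0 * (u1 * v2 - u2 * v1) = v2 * (u1 * x0 + u2 * x1) - u2 * (v1 * x0 + v2 * x1) by ring.
  by rewrite Hu Hv !mulr0 subr0.
have h1 : x1 * (u1 * v2 - u2 * v1) = 0.
  have -> : x1 * (u1 * v2 - u2 * v1) = u1 * (v1 * x0 + v2 * x1) - v1 * (u1 * x0 + u2 * x1) by ring.
  by rewrite Hu Hv !mulr0 subr0.
move: h0 h1 => /eqP; rewrite mulf_eq0 (negbTE HJ) orbF => /eqP ->.
by move/eqP; rewrite mulf_eq0 (negbTE HJ) orbF => /eqP ->.
Qed.

Lemma kernel_alg (a b x0 x1 x2 x3 x4 : R) (f g h : BP) :
  a != 0 -> b != 0 ->
  - (3 * a ^+ 2) * x0 + 3 * a * x2 = 0 ->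
  - (2 * a * b) * x0 - a ^+ 2 * x1 + b * x2 + 2 * a * x3 = 0 ->
  - (3 * b ^+ 2) * x1 + 3 * b * x4 = 0 ->
  cc f 0 * x0 + cc f 1 * x1 + cc f 2 * x2 + cc f 3 * x3 + cc f 4 * x4 = 0 ->
  cc g 0 * x0 + cc g 1 * x1 + cc g 2 * x2 + cc g 3 * x3 + cc g 4 * x4 = 0 ->
  cc h 0 * x0 + cc h 1 * x1 + cc h 2 * x2 + cc h 3 * x3 + cc h 4 * x4 = 0 ->
  [\/ Jf f g a b != 0, Jf f h a b != 0 | Jf g h a b != 0] ->
  [/\ x0 = 0, x1 = 0, x2 = 0, x3 = 0 & x4 = 0].
Proof.
move=> a0 b0 E0 E1 E3 Ef Eg Eh HJ.
have e2 : x2 = a * x0.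
  apply/eqP; rewrite -subr_eq0; apply/eqP.
  have : (3 * a) * (x2 - a * x0) = 0 by rewrite -E0; ring.
  by move/eqP; rewrite mulf_eq0 mulf_eq0 pnatr_eq0 (negbTE a0) /= => /eqP.
have e4 : x4 = b * x1.
  apply/eqP; rewrite -subr_eq0; apply/eqP.
  have : (3 * b) * (x4 - b * x1) = 0 by rewrite -E3; ring.
  by move/eqP; rewrite mulf_eq0 mulf_eq0 pnatr_eq0 (negbTE b0) /= => /eqP.
have e3 : 2 * x3 = b * x0 + a * x1.
  apply/eqP; rewrite -subr_eq0; apply/eqP.
  have : a * (2 * x3 - (b * x0 + a * x1)) = 0 by rewrite -E1 e2; ring.
  by move/eqP; rewrite mulf_eq0 (negbTE a0) /= => /eqP.
have W (p : BP) : cc p 0 * x0 + cc p 1 * x1 + cc p 2 * x2 + cc p 3 * x3 + cc p 4 * x4 = 0 ->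
    w1 p a b * x0 + w2 p a b * x1 = 0.
  move=> E; rewrite /w1 /w2.
  have -> : (2 * cc p 0 + 2 * cc p 2 * a + cc p 3 * b) * x0 + (2 * cc p 1 + cc p 3 * a + 2 * cc p 4 * b) * x1
     = 2 * (cc p 0 * x0 + cc p 1 * x1 + cc p 2 * x2 + cc p 4 * x4) + cc p 3 * (2 * x3).
    by rewrite e3 e2 e4; ring.
  transitivity (2 * (cc p 0 * x0 + cc p 1 * x1 + cc p 2 * x2 + cc p 3 * x3 + cc p 4 * x4)); first ring.
  by rewrite E mulr0.
have [Hx0 Hx1] : x0 = 0 /\ x1 = 0.
  case: HJ => HJ.
  - by apply: (pair_zero _ _ _ _ _ _ (W _ Ef) (W _ Eg)); rewrite -/(Jf _ _ a b).
  - by apply: (pair_zero _ _ _ _ _ _ (W _ Ef) (W _ Eh)); rewrite -/(Jf _ _ a b).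
  - by apply: (pair_zero _ _ _ _ _ _ (W _ Eg) (W _ Eh)); rewrite -/(Jf _ _ a b).
split => //; first by rewrite e2 Hx0 mulr0.
  have : 2 * x3 = 0 by rewrite e3 Hx0 Hx1 !mulr0 addr0.
  by move/eqP; rewrite mulf_eq0 pnatr_eq0 /= => /eqP.
by rewrite e4 Hx1 mulr0.
Qed.

Lemma rank_full (m : nat) (M : 'M[R]_(m, 5)) :
  (forall v : 'cV_5, M *m v = 0 -> v = 0) -> \rank M = 5%N.
Proof.
move=> Hker.
have K0 : cokermx M = 0.
  apply/matrixP => i j; rewrite mxE.
  have := Hker (col j (cokermx M)).
  rewrite {1}colE mulmxA mulmx_coker mul0mx => /(_ erefl) H.
  by have := congr1 (fun A : 'cV_5 => A i 0) H; rewrite !mxE.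
have := mxrank_coker M; rewrite K0 mxrank0 => /esym/eqP; rewrite subn_eq0 => H.
by apply/eqP; rewrite eqn_leq rank_leq_col H.
Qed.

Lemma rank5 (xi : R * R) (f g h : BP) : xi.1 != 0 -> xi.2 != 0 ->
  [\/ Jf f g xi.1 xi.2 != 0, Jf f h xi.1 xi.2 != 0 | Jf g h xi.1 xi.2 != 0] ->
  dim_sum xi f g h = 5%N.
Proof.
move=> a0 b0 HJ; rewrite /dim_sum; apply: rank_full => v.
rewrite mul_col_mx => /eqP; rewrite col_mx_eq0 => /andP [/eqP HT /eqP HB].
pose x j := v (inord j) 0.
have Hv : forall j : 'I_5, v j 0 = x j by move=> j; rewrite /x inord_val.
have ET : forall i (Hi : (i < 4)%N), \sum_(j < 5) (rowT xi.1 xi.2 i)`_j * x j = 0.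
  move=> i Hi; have := congr1 (fun A : 'M[R]_(4,1) => A (Ordinal Hi) 0) HT; rewrite !mxE => H; rewrite -[X in _ = X]H.
  by apply: eq_bigr => j _; rewrite mxE rowS3 mxE Hv.
have EB : forall i (Hi : (i < 3)%N), \sum_(j < 5) cc (nth 0 [:: f; g; h] i) j * x j = 0.
  move=> i Hi; have := congr1 (fun A : 'M[R]_(3,1) => A (Ordinal Hi) 0) HB; rewrite !mxE => H; rewrite -[X in _ = X]H.
  by apply: eq_bigr => j _; rewrite !mxE Hv.
have E0 := ET 0%N isT; have E1 := ET 1%N isT; have E3 := ET 3%N isT.
have Ef := EB 0%N isT; have Eg := EB 1%N isT; have Eh := EB 2%N isT.
move: E0 E1 E3 Ef Eg Eh; rewrite !big_ord_recl !big_ord0 /bump /= => E0 E1 E3 Ef Eg Eh.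
have [] := @kernel_alg xi.1 xi.2 (x 0%N) (x 1%N) (x 2%N) (x 3%N) (x 4%N) f g h
  a0 b0 _ _ _ _ _ _ HJ.
- by rewrite -[RHS]E0; ring.
- by rewrite -[RHS]E1; ring.
- by rewrite -[RHS]E3; ring.
- by rewrite -[RHS]Ef; ring.
- by rewrite -[RHS]Eg; ring.
- by rewrite -[RHS]Eh; ring.
move=> X0 X1 X2 X3 X4; apply/colP => j; rewrite Hv mxE.
by case: j => [[|[|[|[|[|?]]]]] Hj].
Qed.
End S.

Arguments cc {R}. Arguments w1 {R}. Arguments w2 {R}. Arguments Jf {R}.
Section S.
Variable R : realType.
Local Notation vr := (@var_r R).
Local Notation vs := (@var_s R).
Local Notation kst := (@Defs.cst R).
Local Notation BP := (bipoly R).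

Definition par (P Q : nat -> R) i j := P i * Q j - P j * Q i = 0.
Definition MZ (P Q : nat -> R) := [/\ par P Q 0 1, par P Q 2 3, par P Q 3 4 & par P Q 2 4].

Lemma grp_par P Q : MZ P Q -> forall i j, (i < 5)%N -> (j < 5)%N -> (i < 2)%N = (j < 2)%N ->
  par P Q i j.
Proof.
case=> h01 h23 h34 h24 i j.
have sym : forall i j, par P Q i j -> par P Q j i.
  by move=> i' j'; rewrite /par => E; rewrite -[RHS]oppr0 -E; ring.
have dia : forall i, par P Q i i by move=> i'; rewrite /par; ring.
by case: i => [|[|[|[|[|i]]]]]; case: j => [|[|[|[|[|j]]]]] //= _ _ _; auto.
Qed.

Definition D3 (F G H : nat -> R) i j k :=
  F i * (G j * H k - G k * H j) - F j * (G i * H k - G k * H i) + F k * (G i * H j - G j * H i).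

Lemma D3_par (F G H : nat -> R) i j k :
  (par F G i j /\ par F H i j /\ par G H i j) \/
  (par F G i k /\ par F H i k /\ par G H i k) \/
  (par F G j k /\ par F H j k /\ par G H j k) -> D3 F G H i j k = 0.
Proof.
rewrite /par /D3; case=> [[h1 [h2 h3]]|[[h1 [h2 h3]]|[h1 [h2 h3]]]].
- transitivity (H k * (F i * G j - F j * G i) - G k * (F i * H j - F j * H i)
     + F k * (G i * H j - G j * H i)); first ring.
  by rewrite h1 h2 h3; ring.
- transitivity (H j * (F k * G i - F i * G k) - G j * (F k * H i - F i * H k)
     + F j * (G k * H i - G i * H k)); first ring.
  rewrite (_ : F k * G i - F i * G k = - (F i * G k - F k * G i)); last ring.
  rewrite (_ : F k * H i - F i * H k = - (F i * H k - F k * H i)); last ring.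
  rewrite (_ : G k * H i - G i * H k = - (G i * H k - G k * H i)); last ring.
  by rewrite h1 h2 h3; ring.
- transitivity (H i * (F j * G k - F k * G j) - G i * (F j * H k - F k * H j)
     + F i * (G j * H k - G k * H j)); first ring.
  by rewrite h1 h2 h3; ring.
Qed.

Lemma core_alg (F G H : nat -> R) :
  (forall al be ga, (forall j, (j < 5)%N -> al * F j + be * G j + ga * H j = 0) ->
     [/\ al = 0, be = 0 & ga = 0]) ->
  MZ F G -> MZ F H -> MZ G H -> False.
Proof.
move=> ind mFG mFH mGH.
have pFG := grp_par F G mFG; have pFH := grp_par F H mFH; have pGH := grp_par G H mGH.
have D0 : forall i j k, (i < 5)%N -> (j < 5)%N -> (k < 5)%N -> D3 F G H i j k = 0.
  move=> i j k hi hj hk; apply: D3_par.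
  case Ei: (i < 2)%N; case Ej: (j < 2)%N; case Ek: (k < 2)%N;
  first [ left; split; [|split]; apply: pFG || apply: pFH || apply: pGH; by rewrite ?Ei ?Ej ?Ek
        | right; left; split; [|split]; apply: pFG || apply: pFH || apply: pGH; by rewrite ?Ei ?Ej ?Ek
        | right; right; split; [|split]; apply: pFG || apply: pFH || apply: pGH; by rewrite ?Ei ?Ej ?Ek].
have [[i0 [hi0 Fi0]]|nF] := pselect (exists i, (i < 5)%N /\ F i != 0); last first.
  have [] := ind 1 0 0 => [j hj|]; last by move=> /eqP; rewrite oner_eq0.
  have : ~ (F j != 0) by move=> Fj; apply: nF; exists j.
  by move/negP; rewrite negbK => /eqP ->; ring.
have [[i [j [hi [hj mij]]]]|nm] := pselect (exists i j, (i < 5)%N /\ (j < 5)%N /\ F i * G j - F j * G i != 0); last first.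
  have [] := ind (G i0) (- F i0) 0 => [j hj|_ /eqP]; last by rewrite oppr_eq0 (negbTE Fi0).
  have : ~ (F i0 * G j - F j * G i0 != 0) by move=> h; apply: nm; exists i0, j.
  move/negP; rewrite negbK => /eqP E.
  transitivity (-(F i0 * G j - F j * G i0)); first ring.
  by rewrite E oppr0.
have [] := ind (G i * H j - G j * H i) (- (F i * H j - F j * H i)) (F i * G j - F j * G i)
  => [k hk|_ _ /eqP]; last by rewrite (negbTE mij).
by rewrite -(D0 i j k hi hj hk) /D3; ring.
Qed.
End S.

Arguments cc {R}. Arguments w1 {R}. Arguments w2 {R}. Arguments Jf {R}.
Arguments MZ {R}. Arguments par {R}.
Section S.
Variable R : realType.
Local Notation vr := (@var_r R).
Local Notation vs := (@var_s R).
Local Notation kst := (@Defs.cst R).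
Local Notation BP := (bipoly R).

Lemma bicoef0 i k : bicoef (0 : BP) i k = 0.
Proof. by rewrite /bicoef !coef0. Qed.

Lemma indep_cc (f g h : BP) : in_S12 f -> in_S12 g -> in_S12 h -> lin_indep3 f g h ->
  forall al be ga, (forall j, (j < 5)%N -> al * cc f j + be * cc g j + ga * cc h j = 0) ->
     [/\ al = 0, be = 0 & ga = 0].
Proof.
move=> Sf Sg Sh ind al be ga H; apply: ind; apply: bipolyP => i k.
rewrite bicoef0 !bicoefD !bicoefCM.
have [Hik|Hik] := boolP ((i + k == 1)%N || (i + k == 2)%N); last first.
  move: Hik; rewrite negb_or => /andP [h1 h2].
  by rewrite Sf // Sg // Sh // !mulr0 !addr0.
case: i Hik => [|[|[|i]]]; case: k => [|[|[|k]]] //= _.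
- exact: (H 1%N).
- exact: (H 4%N).
- exact: (H 0%N).
- exact: (H 3%N).
- exact: (H 2%N).
Qed.

Lemma MZ_of_J (p q : BP) : (forall a b, Jf p q a b = 0) -> MZ (cc p) (cc q).
Proof.
move=> J0.
have h4 : (4 : R) != 0 by rewrite pnatr_eq0.
split; rewrite /par; apply: (mulfI h4); rewrite mulr0.
- transitivity (Jf p q 0 0); first by rewrite /Jf /w1 /w2; ring.
  by rewrite J0.
- transitivity (Jf p q 1 0 + Jf p q (-1) 0 - 2 * Jf p q 0 0); first by rewrite /Jf /w1 /w2; ring.
  by rewrite !J0; ring.
- transitivity (Jf p q 0 1 + Jf p q 0 (-1) - 2 * Jf p q 0 0); first by rewrite /Jf /w1 /w2; ring.
  by rewrite !J0; ring.
- transitivity (Jf p q 1 1 - Jf p q 1 0 - Jf p q 0 1 + Jf p q 0 0); first by rewrite /Jf /w1 /w2; ring.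
  by rewrite !J0; ring.
Qed.

Lemma exists_J (f g h : BP) : in_S12 f -> in_S12 g -> in_S12 h -> lin_indep3 f g h ->
  exists a b, [\/ Jf f g a b != 0, Jf f h a b != 0 | Jf g h a b != 0].
Proof.
move=> Sf Sg Sh ind; apply: contrapT => N.
have Z : forall a b, [/\ Jf f g a b = 0, Jf f h a b = 0 & Jf g h a b = 0].
  move=> a b; split; apply/eqP; apply: contrapT => /negP H; apply: N; exists a, b.
  - by apply: Or31.
  - by apply: Or32.
  - by apply: Or33.
by apply: (@core_alg R (cc f) (cc g) (cc h) (@indep_cc f g h Sf Sg Sh ind)); apply: MZ_of_J => a b; case: (Z a b).
Qed.
End S.

Arguments cc {R}. Arguments w1 {R}. Arguments w2 {R}. Arguments Jf {R}.
Section S.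
Variable R : realType.
Local Notation vr := (@var_r R).
Local Notation vs := (@var_s R).
Local Notation kst := (@Defs.cst R).
Local Notation BP := (bipoly R).

Lemma evD (p q : BP) xi : ev (p + q) xi = ev p xi + ev q xi.
Proof. by rewrite /ev !hornerD. Qed.
Lemma evB (p q : BP) xi : ev (p - q) xi = ev p xi - ev q xi.
Proof. by rewrite /ev !hornerE. Qed.
Lemma evM (p q : BP) xi : ev (p * q) xi = ev p xi * ev q xi.
Proof. by rewrite /ev !hornerM. Qed.
Lemma evC c xi : ev (kst c) xi = c.
Proof. by rewrite /ev /Defs.cst !hornerC. Qed.
Lemma evr xi : ev vr xi = xi.1.
Proof. by rewrite /ev /var_r hornerX hornerC. Qed.
Lemma evs xi : ev vs xi = xi.2.
Proof. by rewrite /ev /var_s hornerC hornerX. Qed.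

Definition W1 (p : BP) : BP := kst (2 * cc p 0) + kst (2 * cc p 2) * vr + kst (cc p 3) * vs.
Definition W2 (p : BP) : BP := kst (2 * cc p 1) + kst (cc p 3) * vr + kst (2 * cc p 4) * vs.
Definition Jpoly (p q : BP) : BP := W1 p * W2 q - W2 p * W1 q.

Lemma evJ p q xi : ev (Jpoly p q) xi = Jf p q xi.1 xi.2.
Proof.
rewrite /Jpoly /W1 /W2 !(evB, evD, evM, evC, evr, evs) /Jf /w1 /w2; ring.
Qed.

Definition Pbad (f g h : BP) : BP :=
  vr * vs * (Jpoly f g * Jpoly f g + Jpoly f h * Jpoly f h + Jpoly g h * Jpoly g h).

Lemma sq3_eq0 (x y z : R) : x * x + y * y + z * z = 0 -> [/\ x = 0, y = 0 & z = 0].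
Proof.
move=> H.
have hx : 0 <= x * x by rewrite -expr2 sqr_ge0.
have hy : 0 <= y * y by rewrite -expr2 sqr_ge0.
have hz : 0 <= z * z by rewrite -expr2 sqr_ge0.
move/eqP: H; rewrite paddr_eq0 ?addr_ge0 // paddr_eq0 // => /andP [/andP [a b] c].
by split; [move: a | move: b | move: c]; rewrite mulf_eq0 orbb => /eqP.
Qed.

Lemma evP_good (f g h : BP) xi : ev (Pbad f g h) xi != 0 -> dim_sum xi f g h = 5%N.
Proof.
rewrite /Pbad !(evM, evD, evr, evs, evJ) !mulf_eq0 !negb_or => /andP [/andP [a0 b0] HJ].
apply: rank5 => //.
have [H1|] := boolP (Jf f g xi.1 xi.2 != 0); first by apply: Or31.
rewrite negbK => /eqP e1.
have [H2|] := boolP (Jf f h xi.1 xi.2 != 0); first by apply: Or32.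
rewrite negbK => /eqP e2.
apply: Or33; apply: contra HJ => /eqP e3; by rewrite e1 e2 e3 !mulr0 !addr0.
Qed.

Lemma Pbad_neq0 (f g h : BP) : in_S12 f -> in_S12 g -> in_S12 h -> lin_indep3 f g h ->
  Pbad f g h != 0.
Proof.
move=> Sf Sg Sh ind; rewrite /Pbad !mulf_neq0 //.
- by rewrite /var_r polyX_eq0.
- by rewrite /var_s polyC_eq0 polyX_eq0.
have [a [b HJ]] := @exists_J R f g h Sf Sg Sh ind.
apply/negP => /eqP E.
have := congr1 (fun p => ev p (a, b)) E; rewrite /= !(evM, evD, evJ) /ev !horner0 /=.
move/sq3_eq0 => [e1 e2 e3]; by case: HJ => /eqP; rewrite ?e1 ?e2 ?e3.
Qed.
End S.


Section S.
Variable R : realType.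
Local Open Scope classical_set_scope.
Local Open Scope ring_scope.
Local Notation BP := (bipoly R).

Lemma roots_seq (p : {poly R}) : p != 0 -> exists s : seq R, forall x, p.[x] = 0 -> x \in s.
Proof.
move: {2}(size p) (leqnn (size p)) => n; elim: n p => [|n IH] p Hs p0.
  by move: p0; rewrite -size_poly_eq0 -leqn0 Hs.
have [[x0 rx0]|nr] := pselect (exists x, p.[x] = 0); last first.
  by exists [::] => x px; exfalso; apply: nr; exists x.
have /factor_theorem [q Eq] : root p x0 by apply/eqP.
have q0 : q != 0 by apply: contra p0 => /eqP q0; rewrite Eq q0 mul0r.
have Hq : (size q <= n)%N.
  have := Hs; rewrite Eq size_Mmonic ?monicXsubC // ?size_XsubC ?addn2 //.
have [s Hsq] := IH q Hq q0.
exists (x0 :: s) => x; rewrite Eq hornerM hornerXsubC => /eqP; rewrite mulf_eq0 => /orP [/eqP /Hsq xs|].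
  by rewrite in_cons xs orbT.
by rewrite subr_eq0 => /eqP ->; rewrite mem_head.
Qed.

Lemma evE (P : BP) (xi : R * R) : ev P xi = \sum_(i < size P) (P`_i).[xi.2] * xi.1 ^+ i.
Proof.
rewrite /ev (horner_coef P) horner_sum; apply: eq_bigr => i _.
by rewrite -rmorphXn hornerM hornerC.
Qed.

Lemma ev_measurable (P : BP) : measurable_fun setT (fun xi : R * R => ev P xi).
Proof.
rewrite (_ : (fun xi => ev P xi) = (fun xi : R * R => \sum_(i <- index_enum 'I_(size P)) (P`_i).[xi.2] * xi.1 ^+ i)); last first.
  by apply/funext => xi; rewrite evE.
apply: measurable_sum => i.
apply: measurable_realfun.measurable_funM.
  by apply: measurableT_comp; [exact: measurable_poly | exact: measurable_snd].
by apply: measurable_realfun.measurable_funX; exact: measurable_fst. Qed.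

Lemma coef_ev (P : BP) k (a : R) :
  (P.[a%:P])`_k = (\poly_(i < size P) (P`_i)`_k).[a].
Proof.
rewrite horner_coef coef_sum (@horner_coef_wide _ (size P)) ?size_poly //.
apply: eq_bigr => i _; rewrite coef_poly ltn_ord -rmorphXn coefMC.
by [].
Qed.

Local Notation mu := ((@lebesgue_measure R) \x (@lebesgue_measure R))%E.

Lemma null_zero (P : BP) : P != 0 -> mu.-negligible [set xi : R * R | ev P xi = 0].
Proof.
move=> P0.
set i0 := (size P).-1.
have si0 : (i0 < size P)%N by rewrite /i0 ltn_predL size_poly_gt0.
have Pi0 : P`_i0 != 0 by rewrite -lead_coefE lead_coef_eq0.
set k0 := (size P`_i0).-1.
have c0 : (P`_i0)`_k0 != 0 by rewrite -lead_coefE lead_coef_eq0.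
set Q := \poly_(i < size P) (P`_i)`_k0.
have Q0 : Q != 0.
  apply: contra c0 => /eqP Q0; have := congr1 (fun p : {poly R} => p`_i0) Q0.
  by rewrite coef_poly coef0 si0 => ->.
have [s Hs] := roots_seq Q Q0.
have A0m : measurable [set a : R | Q.[a] = 0].
  by have := measurable_poly Q measurableT (measurable_set1 0); rewrite setTI.
have A0null : lebesgue_measure [set a : R | Q.[a] = 0] = 0%E.
  apply: countable_lebesgue_measure0; apply: finite_set_countable.
  by apply: (sub_finite_set _ (finite_seq s)) => a /Hs.
have sub : [set xi : R * R | ev P xi = 0] `<=`
    [set xi | Q.[xi.1] = 0] `|` [set xi | ev P xi = 0 /\ Q.[xi.1] != 0].
  by move=> xi /= E; have [->|] := eqVneq Q.[xi.1] 0; [left|right].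
apply: (@negligibleS _ _ _ mu _ _ sub).
apply: (@negligibleU _ _ _ mu).
- exists ([set a | Q.[a] = 0] `*` setT); split.
  + exact: measurableX.
  + have := product_measure1E (@lebesgue_measure R) (@lebesgue_measure R) A0m measurableT. move=> E; apply: (eq_trans E); rewrite [X in (X * _)%E](_ : _ = 0%E) ?mul0e //; exact: A0null.
  + by move=> xi /= E; split.
- exists [set xi | ev P xi = 0 /\ Q.[xi.1] != 0]; split => //.
  + have -> : [set xi : R * R | ev P xi = 0 /\ Q.[xi.1] != 0] =
        (setT `&` (fun xi => ev P xi) @^-1` [set 0]) `&`
        (setT `&` (fun xi : R * R => Q.[xi.1]) @^-1` (~` [set 0])).
      apply/seteqP; split => xi /=; first by move=> [E /eqP Qx].
      by move=> [[_ E] [_ /eqP Qx]].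
    apply: measurableI.
      exact: (ev_measurable P measurableT _ (measurable_set1 0)).
    have mf : measurable_fun setT (fun xi : R * R => Q.[xi.1]) by exact: (measurableT_comp (@measurable_poly _ Q setT) measurable_fst).
    exact: (mf measurableT _ (measurableC (measurable_set1 0))).
  + rewrite /product_measure1; apply: integral0_eq => x _ /=.
    apply: countable_lebesgue_measure0; apply: finite_set_countable.
    have [Qx|Qx] := eqVneq Q.[x] 0.
      apply: (sub_finite_set _ (finite_seq (@nil R))) => y; rewrite /xsection /= inE => -[_].
      by rewrite Qx eqxx.
    have Px : P.[x%:P] != 0 by apply: contra Qx => /eqP E; rewrite -coef_ev E coef0.
    have [t Ht] := roots_seq (P.[x%:P]) Px.
    by apply: (sub_finite_set _ (finite_seq t)) => y; rewrite /xsection /= inE => -[E _]; apply: Ht.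
Qed.
End S.

Arguments Pbad {R}.
Theorem lemma7p4 (R : realType) (f g h : bipoly R) :
  in_S12 f -> in_S12 g -> in_S12 h -> lin_indep3 f g h ->
  {ae ((@lebesgue_measure R) \x (@lebesgue_measure R))%E,
     forall xi : R * R, dim_sum xi f g h = 5%N}.
Proof.
move=> Sf Sg Sh ind.
have P0 := @Pbad_neq0 R f g h Sf Sg Sh ind.
have N := @null_zero R _ P0.
apply: (negligibleS _ N) => xi /= Hd.
apply/eqP; apply: contraT => H; exfalso; apply: Hd; exact: (@evP_good R f g h xi H).
Qed.
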